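(* Let $L/K$ be a nontrivial finite extension inside $\bar K$, $G={\rm Gal}(\tilde L/K)$, $H={\rm Gal}(\tilde L/L)$. Let $N=\tilde L^{N_G(H)}$ (the unique intermediate field with $L/N$ Galois of degree $r_K(L)$) and $F=\tilde L^{H^G}$ (the unique Galois subextension of $L/K$ of maximum degree). Then: (1) $N_G(H)=G$ iff $r_K(L)=[L:K]$ iff $t_K(L)=[L:K]$ iff $H^G=H$; (2) $H\trianglelefteq H^G$ iff $H^G\subseteq N_G(H)$ iff $N\subseteq F$; (3) if $N_G(H)\trianglelefteq G$ then $H^G\subseteq N_G(H)$; (4) if $H^G=N_G(H)$ then $N_G(H)$ is a proper normal subgroup of $G$ and $H$ is a proper normal subgroup of $H^G$; (5) $H^G=N_G(H)$ iff $N=F$ iff the unique descending chain of $L/K$ is $L\supsetneq N\supsetneq K$, the unique ascending chain of $L/K$ is $K\subsetneq F\subsetneq L$, and these two chains coincide. In this case $r_K(L)\,t_K(L)=[L:K]$ and $t_K(L)=s_K(L)$.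
   Context: $K$ is a perfect field with a fixed algebraic closure $\bar K$; all extensions finite inside $\bar K$; $\tilde L$ is the Galois closure of $L/K$. Cluster size: for $L=K(\alpha)$ with minimal polynomial $f$, $r_K(L)$ is the number of roots of $f$ in $L$ ($=|{\rm Aut}(L/K)|$), and $s_K(L)=[L:K]/r_K(L)$. $H^G$ is the normal closure of $H$ in $G$. Ascending index: $t_K(L)=[F:K]$ where $F$ is the unique subfield of $L$ Galois over $K$ of maximum degree. The unique descending chain of $L/K$ is $L=N_0\supsetneq N_1\supsetneq\cdots\supsetneq N_k$ where each $N_i$ is the unique intermediate field of $N_{i-1}/K$ with $N_{i-1}/N_i$ Galois of degree $r_K(N_{i-1})$, stopping at the first $N_k$ with $r_K(N_k)=1$. The unique ascending chain of $L/K$ is $K=F_0\subsetneq F_1\subsetneq\cdots\subsetneq F_k$ where each $F_i$ is the unique subfield of $L$ Galois over $F_{i-1}$ of maximum degree, stopping at the first $F_k$ with $t_{F_k}(L)=1$. *)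

(* Defs.v *)
From HB Require Import structures.
From mathcomp Require Import all_boot all_order all_algebra all_fingroup all_solvable all_field.
From Stdlib Require Import ClassicalEpsilon.
Set Implicit Arguments. Unset Strict Implicit. Unset Printing Implicit Defensive.
Import GRing.Theory.

(* Ambient setting: Omega is a finite normal extension of a base field F0;
   all fields considered are subfields of Omega (a substitute for \bar K,
   large enough to contain the Galois closure of L/K). *)

Section Defs.
Variables (F0 : fieldType) (Om : splittingFieldType F0).

Definition pbool (P : Prop) : bool :=
  if excluded_middle_informative P then true else false.

Definition galois_closure (K L : {subfield Om}) : {subfield Om} :=
  \big[@prodv_aspace _ Om/1%AS]_(g in 'Gal({:Om} / K)%g)
     aimg_aspace (gal_repr g) L.

(* cluster size r_K(L) = |Aut(L/K)| *)
Definition cluster_size (K L : {vspace Om}) : nat := #|'Gal(L / K)%g|.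

Definition cluster_number (K L : {vspace Om}) : nat :=
  \dim_K L %/ cluster_size K L.

Definition ascending_index (K L : {subfield Om}) : nat :=
  \max_(n < (\dim_K L).+1 |
     pbool (exists F : {subfield Om},
              [/\ galois K F, (F <= L)%VS & \dim_K F = n])) n.

Definition descending_chain (K L : {subfield Om}) (s : seq {subfield Om}) : Prop :=
  exists k, [/\ size s = k.+1, nth L s 0 = L,
    (forall i, i < k ->
       let A := nth L s i in let B := nth L s i.+1 in
       [/\ (K <= B)%VS, (B <= A)%VS, galois B A,
           \dim_B A = cluster_size K A & cluster_size K A != 1])
    & cluster_size K (nth L s k) = 1].

Definition ascending_chain (K L : {subfield Om}) (s : seq {subfield Om}) : Prop :=
  exists k, [/\ size s = k.+1, nth K s 0 = K,
    (forall i, i < k ->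
       let A := nth K s i in let B := nth K s i.+1 in
       [/\ (A <= B)%VS, (B <= L)%VS, galois A B,
           \dim_A B = ascending_index A L & ascending_index A L != 1])
    & ascending_index (nth K s k) L = 1].

End Defs.

(* Main.v *)
Require Import Defs.
From HB Require Import structures.
From mathcomp Require Import all_boot all_order all_algebra all_fingroup all_solvable all_field.
From Stdlib Require Import ClassicalEpsilon.
Set Implicit Arguments. Unset Strict Implicit. Unset Printing Implicit Defensive.
Import GRing.Theory.

Section Closure.
Variables (F0 : fieldType) (Om : splittingFieldType F0) (K L : {subfield Om}).
Local Notation Lt := (galois_closure K L).

Lemma Lt_val : (Lt : {vspace Om}) =
  (\big[@prodv _ Om/1%VS]_(g in 'Gal({:Om} / K)%g) (gal_repr g @: L))%VS.
Proof. by rewrite /galois_closure (big_morph (@asval _ _) (fun _ _ => erefl) (erefl _)). Qed.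

Lemma term_sub_Lt h : h \in 'Gal({:Om} / K)%g -> ((gal_repr h) @: L <= Lt)%VS.
Proof.
move=> Gh; rewrite Lt_val (bigD1 h) //=.
rewrite -{1}[(h @: L)%VS]prodv1; apply: prodvSr.
apply: (big_ind (fun V : {vspace Om} => (1 <= V)%VS)) => //= [U V hU hV|g _].
  by rewrite -[1%VS]prodv1; apply: prodvS.
by rewrite -(aimg1 (gal_repr g)); apply: limgS; apply: sub1v.
Qed.

Lemma L_sub_Lt : (L <= Lt)%VS.
Proof.
have := term_sub_Lt (group1 _).
suff -> : (gal_repr (1%g : gal_of {:Om}) @: L)%VS = L by [].
by rewrite (etrans (eq_in_limg _) (lim1g _)) // => a _; rewrite lfunE /= gal_id.
Qed.

Lemma galois_Lt : galois K {:Om} -> (K <= L)%VS -> galois K Lt.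
Proof.
move=> /and3P[_ sepK _] sKL.
have sKLt := subv_trans sKL L_sub_Lt.
rewrite /galois sKLt (separableSr (subvf _) sepK) /=.
apply/forall_inP => x; rewrite inE kAutfE => homKx.
have hom1x : kHom K {:Om} x := homKx.
have xLt : (x @: Lt <= Lt)%VS.
  rewrite /galois_closure; apply: (big_ind (fun V : {aspace Om} => (x @: V <= Lt)%VS)).
  - by rewrite aimg1 sub1v.
  - move=> U V hU hV /=; rewrite aimgM; apply: prodv_sub => //.
  - move=> g Gg /=.
    have Gx : gal {:Om} x \in 'Gal({:Om} / K)%g.
      rewrite gal_kAut ?subvf // kAutfE.
      rewrite (kHom_eq (subvf _) (galK _)) //; exact: subvf.
    rewrite -limg_comp.
    have -> : ((x \o gal_repr g)%VF @: L = (gal_repr (g * gal {:Om} x)%g) @: L)%VS.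
      apply: eq_in_limg => a _; rewrite lfunE /= galM ?memvf // galK ?subvf ?memvf //.
    exact: term_sub_Lt (groupM Gg Gx).
rewrite eqEdim xLt /= (kHom_dim (kHomSr (subvf Lt) homKx)) leqnn //.
Qed.
End Closure.

Section Main.
Variables (F0 : fieldType) (Om : splittingFieldType F0) (K L : {subfield Om}).
Hypotheses (galOm : galois K {:Om}) (sKL : (K <= L)%VS).
Local Notation Lt := (galois_closure K L).
Local Notation G := ('Gal(Lt / K))%G.
Local Notation H := ('Gal(Lt / L))%G.

Lemma galKLt : galois K Lt. Proof. exact: galois_Lt. Qed.
Lemma sLLt : (L <= Lt)%VS. Proof. exact: L_sub_Lt. Qed.
Lemma sKLt : (K <= Lt)%VS. Proof. exact: subv_trans sKL sLLt. Qed.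
Lemma galLLt : galois L Lt.
Proof. by apply: (galoisS _ galKLt); rewrite sKL sLLt. Qed.
Lemma sHG : H \subset G. Proof. exact: galS. Qed.

Lemma normH_img x : x \in G -> (x \in 'N(H)%g) = (gal_repr x @: L == L)%VS.
Proof.
move=> Gx; set M := aimg_aspace (gal_repr x) L.
have sKM : (K <= M)%VS.
  apply/subvP => a Ka; rewrite /= -(fixed_gal sKLt Gx Ka); apply: memv_img.
  exact: (subvP sKL).
have sMLt : (M <= Lt)%VS.
  by rewrite /=; rewrite -{2}(limg_gal x); apply: limgS; exact: sLLt.
have galMLt : galois M Lt by apply: (galoisS _ galKLt); rewrite sKM sMLt.
apply/normP/eqP => [eqH | eqM].
  have := gal_conjg L x; rewrite eqH => eqG.
  have := galois_fixedField galMLt; rewrite /= -eqG.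
  by move/galois_fixedField: galLLt => -> .
by rewrite gal_conjg eqM.
Qed.

Local Notation NH := ('N_G(H))%g.

Definition res (x : gal_of Lt) : gal_of L := gal L (gal_repr x).

Lemma NH_img x : x \in NH -> (gal_repr x @: L = L)%VS.
Proof. by case/setIP => Gx; rewrite normH_img // => /eqP. Qed.

Lemma resE x a : x \in NH -> a \in L -> res x a = x a.
Proof. by move=> /NH_img xL; apply: galK; rewrite xL. Qed.

Lemma resM : {in NH &, {morph res : x y / (x * y)%g}}.
Proof.
move=> x y Nx Ny /=; apply/eqP/gal_eqP => a La.
have Lta := subvP sLLt a La.
rewrite resE ?groupM // galM // galM // resE // resE //.
by rewrite -(NH_img Nx); apply: memv_img.
Qed.
Canonical res_morph := Morphism resM.

Lemma ker_res : ('ker_NH res_morph)%g = H.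
Proof.
apply/setP => x; apply/idP/idP.
  case/setIP => Nx /mker res1.
  rewrite gal_kHom ?sLLt //; apply/kAHomP => a La.
  by rewrite -resE // res1 gal_id.
move=> Hx; have Nx : x \in NH.
  by rewrite inE (subsetP sHG) //= (subsetP (normG _)).
rewrite inE Nx; apply/kerP => //; apply/eqP/gal_eqP => a La.
by rewrite resE // gal_id (fixed_gal sLLt Hx).
Qed.

Lemma img_res : (res_morph @* NH)%g = 'Gal(L / K)%g.
Proof.
apply/setP => y; apply/idP/idP.
  case/morphimP => x Nx _ ->.
  rewrite gal_kAut //= (kAut_eq sKL (fun a La => resE Nx La)).
  rewrite /kAut NH_img // eqxx andbT; case/setIP: Nx => Gx _.
  by apply: kHomSr sLLt _; rewrite -gal_kHom ?sKLt.
move=> Ky; have := Ky; rewrite gal_kAut // => autLy.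
have homOy : kHom K {:Om} (gal_repr y).
  apply/kAHomP => a Ka; exact: (kAHomP (kHom_kAut_sub autLy)).
have autLty : kAut K Lt (gal_repr y).
  have /and3P[_ _ nKLt] := galKLt.
  apply: (@normalField_kAut _ _ K Lt fullv _ _ nKLt); first by rewrite sKLt subvf.
  by rewrite kAutfE.
have yLt : (gal_repr y @: Lt <= Lt)%VS by case/andP: autLty => _ /eqP ->.
set x := gal Lt (gal_repr y).
have xE : {in Lt, x =1 gal_repr y} by apply: galK.
have Gx : x \in G by rewrite gal_kAut ?sKLt // (kAut_eq sKLt xE).
have xL : (gal_repr x @: L = L)%VS.
  rewrite (eq_in_limg (sub_in1 (subvP sLLt) xE)).
  by case/andP: autLy => _ /eqP.
have Nx : x \in NH by rewrite inE Gx normH_img // xL eqxx.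
apply/morphimP; exists x => //; apply/eqP/gal_eqP => a La.
by rewrite /= resE // xE // (subvP sLLt).
Qed.

Lemma card_res : #|'Gal(L / K)%g| = #|NH : H|%g.
Proof. by rewrite -img_res card_morphim setIid -indexgI ker_res. Qed.
End Main.

Section Asc.
Variables (F0 : fieldType) (Om : splittingFieldType F0).

Lemma pboolP (P : Prop) : pbool P = true <-> P.
Proof. by rewrite /pbool; case: excluded_middle_informative. Qed.

Lemma asc_eq (K L E : {subfield Om}) :
  galois K E -> (E <= L)%VS ->
  (forall F : {subfield Om}, galois K F -> (F <= L)%VS -> (\dim_K F <= \dim_K E)%N) ->
  ascending_index K L = \dim_K E.
Proof.
move=> galE sEL maxE; apply/eqP; rewrite eqn_leq; apply/andP; split.
  apply/bigmax_leqP => i /pboolP [F [galF sFL <-]]; exact: maxE.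
have lt : (\dim_K E < (\dim_K L).+1)%N by rewrite ltnS leq_div2r // dimvS.
apply: (leq_bigmax_cond (Ordinal lt)) => /=.
by apply/pboolP; exists E.
Qed.

Lemma galois_refl (M : {subfield Om}) : galois M M.
Proof.
apply/and3P; split; [exact: subvv | exact: separable_refl |].
apply/forall_inP => x; rewrite inE kAutfE => homx.
rewrite (etrans (eq_in_limg _) (lim1g _)) // => a Ma.
by rewrite lfunE /= (kAHomP homx).
Qed.

Lemma dimvv (M : {subfield Om}) : \dim_M M = 1%N.
Proof. by rewrite divnn adim_gt0. Qed.

Lemma asc_galois (A B : {subfield Om}) : galois A B -> ascending_index A B = \dim_A B.
Proof.
move=> galAB; apply: asc_eq => // F _ sFB.
by rewrite leq_div2r // dimvS.
Qed.

Lemma cluster_size_refl (M : {subfield Om}) : cluster_size M M = 1%N.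
Proof. by rewrite /cluster_size -galois_dim ?galois_refl ?dimvv. Qed.
End Asc.

Section Main2.
Variables (F0 : fieldType) (Om : splittingFieldType F0) (K L : {subfield Om}).
Hypotheses (galOm : galois K {:Om}) (sKL : (K <= L)%VS) (nLK : L != K).
Local Notation Lt := (galois_closure K L).
Local Notation G := ('Gal(Lt / K))%G.
Local Notation H := ('Gal(Lt / L))%G.
Local Notation NH := ('N_G(H))%g.
Local Notation HG := (<<class_support H G>>)%g.
Local Notation NHG := ('N_G(H))%G.
Local Notation HGG := (<<class_support H G>>)%G.

Let galKLt := galKLt galOm sKL.
Let galLLt := galLLt galOm sKL.
Let sLLt := sLLt K L.
Let sKLt := sKLt sKL.
Let sHG := sHG sKL.

Lemma sHHG : H \subset HG.
Proof. exact: subset_trans (sub_class_support _ _) (subset_gen _). Qed.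
Lemma sHGG : HG \subset G.
Proof. by rewrite gen_subG class_support_subG. Qed.
Lemma nHG : (HG <| G)%g.
Proof. by rewrite /normal sHGG norms_gen // class_support_norm. Qed.
Lemma minHG (M : {group gal_of Lt}) : H \subset M -> (M <| G)%g -> HG \subset M.
Proof.
move=> sHM /andP[_ nMG]; rewrite gen_subG class_support_sub_norm //.
Qed.
Lemma sHNH : H \subset NH.
Proof. by rewrite subsetI sHG normG. Qed.
Lemma sNHG : NH \subset G.
Proof. exact: subsetIl. Qed.

Lemma fixH : fixedField H = L.
Proof. exact/galois_fixedField. Qed.
Lemma fixG : fixedField G = K.
Proof. exact/galois_fixedField. Qed.

Lemma fix_inj (A B : {group gal_of Lt}) : fixedField A = fixedField B -> A = B.
Proof.
by move=> eqAB; apply: val_inj; rewrite /= -(gal_fixedField A) -(gal_fixedField B) eqAB.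
Qed.

Lemma n_idx : \dim_K L = #|G : H|%g.
Proof. by rewrite -(dim_fixed_galois galKLt sHG) fixH. Qed.

Lemma HneG : (H : {set _}) != G.
Proof.
apply: contra nLK => /eqP eqHG; apply/eqP; apply: val_inj => /=.
by rewrite -fixH -fixG eqHG.
Qed.

Local Notation Fm := (fixedField_aspace HG).
Local Notation Nm := (fixedField_aspace NH).

Lemma galKF : galois K Fm.
Proof. exact (normal_fixedField_galois galKLt nHG). Qed.
Lemma sFL : (Fm <= L)%VS.
Proof. by rewrite -{2}fixH; apply: fixedFieldS sHHG. Qed.
Lemma sKF : (K <= Fm)%VS.
Proof. by rewrite -{1}fixG; apply: fixedFieldS sHGG. Qed.

Lemma t_idx : ascending_index K L = #|G : HG|%g.
Proof.
transitivity (\dim_K Fm); last exact (dim_fixed_galois galKLt sHGG).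
apply: asc_eq galKF sFL _.
move=> E galE sEL; rewrite leq_div2r // dimvS //.
have sELt := subv_trans sEL sLLt.
have /and3P[sKE _ nKE] := galE.
have nE : ('Gal(Lt / E) <| G)%g by apply: normalField_normal; rewrite ?sKE.
have sHE : H \subset 'Gal(Lt / E)%G by apply: galS.
have galELt : galois E Lt by apply: (galoisS _ galKLt); rewrite sKE.
rewrite -{1}(galois_fixedField galELt); apply: fixedFieldS; exact: minHG.
Qed.

Lemma galNLt : galois Nm Lt.
Proof. exact: fixedField_galois. Qed.
Lemma galNm : 'Gal(Lt / Nm)%g = NH.
Proof. exact: gal_fixedField. Qed.
Lemma sKN : (K <= Nm)%VS.
Proof. by rewrite -{1}fixG; apply: fixedFieldS sNHG. Qed.
Lemma sNL : (Nm <= L)%VS.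
Proof. by rewrite -{2}fixH; apply: fixedFieldS sHNH. Qed.
Lemma dimNL : \dim_Nm L = #|NH : H|%g.
Proof.
have sH : H \subset 'Gal(Lt / Nm)%g by rewrite galNm sHNH.
have := dim_fixed_galois galNLt sH; rewrite fixH => ->.
by rewrite galNm.
Qed.
Lemma galNL : galois Nm L.
Proof.
have nH : (H <| 'Gal(Lt / Nm))%g by rewrite galNm normal_subnorm.
by have := normal_fixedField_galois galNLt nH; rewrite fixH.
Qed.
Lemma r_idx : cluster_size K L = #|NH : H|%g.
Proof. exact: card_res. Qed.


Lemma dimKF : \dim_K Fm = #|G : HG|%g.
Proof. exact (dim_fixed_galois galKLt sHGG). Qed.

Lemma main_body :
  let N := Nm in let F := Fm in
  let n := \dim_K L in
  let r := cluster_size K L in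
  let s := cluster_number K L in
  let t := ascending_index K L in
  [/\ (NH = G <-> r = n), (r = n <-> t = n) & (t = n <-> HG = H)] /\
  [/\ ((H <| HG)%g <-> HG \subset NH) & (HG \subset NH <-> (N <= F)%VS)] /\
  ((NH <| G)%g -> HG \subset NH) /\
  (HG = NH -> [/\ NH \proper G, (NH <| G)%g, H \proper HG & (H <| HG)%g]) /\
  [/\ (HG = NH <-> N = F),
      (N = F <->
         [/\ [/\ descending_chain K L [:: L; N; K], L != N & N != K],
             [/\ ascending_chain K L [:: K; F; L], K != F & F != L]
           & N = F])
    & (HG = NH -> r * t = n /\ t = s)].
Proof.
move=> N F n r s t.
have rE : r = #|NH : H|%g by exact: r_idx.
have nE : n = #|G : H|%g by exact: n_idx.
have tE : t = #|G : HG|%g by exact: t_idx.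
have H0 : (0 < #|H|)%N by exact: cardG_gt0.
have LH : (#|H| * #|G : H|%g)%N = #|G| by exact: Lagrange sHG.
have LN : (#|H| * #|NH : H|%g)%N = #|NH| by exact: (Lagrange sHNH).
have LHG : (#|HG| * #|G : HG|%g)%N = #|G| by exact: (Lagrange sHGG).
have E1 : NH = G <-> r = n.
  split=> [eq | eqrn]; first by rewrite rE nE eq.
  apply/eqP; rewrite eqEcard sNHG /= -LN -LH -rE -nE eqrn leqnn //.
have E2 : HG = H <-> t = n.
  split=> [eq | eqtn]; first by rewrite tE nE eq.
  have cH : #|HG| = #|H|.
    have e : (#|HG| * t = #|H| * t)%N by rewrite {1}tE LHG eqtn nE LH.
    by apply/eqP; rewrite -(eqn_pmul2r (_ : 0 < t)%N) ?e // tE indexg_gt0.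
  by apply/esym/eqP; rewrite eqEcard sHHG cH leqnn.
have E3 : NH = G <-> HG = H.
  split=> [eq | eq].
    have nHG' : (H <| G)%g by rewrite /normal sHG -eq subsetIr.
    by apply/eqP; rewrite eqEsubset minHG ?sHHG.
  have := nHG; rewrite eq => /andP[_ nH].
  by apply/setIidPl.
have r0 : (0 < r)%N by rewrite rE indexg_gt0.
have E2a : (H <| HG)%g <-> HG \subset NH.
  by rewrite /normal sHHG /= subsetI sHGG.
have E2b : HG \subset NH <-> (N <= F)%VS.
  split=> [sub | sNF]; first exact: fixedFieldS.
  have := galS Lt sNF.
  have -> : 'Gal(Lt / F)%g = HG by exact (gal_fixedField HGG).
  have -> : 'Gal(Lt / N)%g = NH by exact (gal_fixedField NHG).
  done.
have notG : HG = NH -> NH != G.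
  move=> eq; apply/eqP => eqG; move/eqP: HneG; apply.
  by have := eqG; rewrite E3 => eqH; rewrite -eqH eq eqG.
have notH : HG = NH -> (H : {set _}) != HG.
  move=> eq; apply/eqP => eqH; move/eqP: (notG eq); apply.
  by apply/E3; exact: esym eqH.
have E4 : HG = NH -> [/\ NH \proper G, (NH <| G)%g, H \proper HG & (H <| HG)%g].
  move=> eq; split.
  - by rewrite properEneq notG // sNHG.
  - by rewrite -eq nHG.
  - by rewrite properEneq notH // sHHG.
  - by apply/E2a; rewrite eq.
have E5a : HG = NH <-> N = F.
  split=> [eq | eqNF]; first by rewrite /N /F eq.
  have : fixedField NHG = fixedField HGG by exact (congr1 (@asval _ _) eqNF).
  by move/fix_inj => eqg; have := congr1 (@gval _) eqg.
have E5c : HG = NH -> (r * t)%N = n /\ t = s.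
  move=> eq; have rt : (r * t)%N = n.
    apply/eqP; rewrite -(eqn_pmul2l H0) mulnA rE LN tE -eq LHG nE LH //.
  by split=> //; rewrite /s /cluster_number -/n -/r -rt mulKn.
split; first by split; [exact: E1 | rewrite -E1 E3 E2 | rewrite -E2].
split; first by split.
split; first by move=> nNH; exact: (minHG sHNH nNH).
split; first exact: E4.
split => //.
split => [eqNF | [] //].
have eq : HG = NH by apply/E5a.
have [pNH nNH pH nH] := E4 eq.
have tne1 : t != 1%N.
  apply/eqP => t1; move/negP: (notG eq); apply; apply/eqP.
  apply/eqP; rewrite eqEcard sNHG /= -eq -LHG -tE t1 muln1 leqnn //.
have rne1 : r != 1%N.
  apply/eqP => r1; move/negP: (notH eq); apply; apply/eqP.
  apply/eqP; rewrite eqEcard sHHG /= eq -LN -rE r1 muln1 leqnn //.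
have galKN : galois K N by rewrite eqNF; exact galKF.
have galFL : galois F L by rewrite -eqNF; exact galNL.
have dimKN : \dim_K N = t by rewrite eqNF tE; exact dimKF.
have dimNL' : \dim_N L = r by rewrite rE; exact dimNL.
have LneN : L != N.
  apply/eqP => eqLN; move/eqP: rne1; apply; rewrite -dimNL' -eqLN dimvv //.
have NneK : N != K.
  apply/eqP => eqNK; move/eqP: tne1; apply; rewrite -dimKN eqNK dimvv //.
have sKN' : (K <= N)%VS by exact sKN.
have sNL' : (N <= L)%VS by exact sNL.
split=> //; split=> //.
- exists 2%N; split=> //; last exact: cluster_size_refl.
  case=> [|[|i]] // _ /=; split=> //.
  + exact galNL.
  + by rewrite /cluster_size -galois_dim.
  + by rewrite /cluster_size -galois_dim // dimKN.
- exists 2%N; split=> //; last by rewrite asc_galois ?galois_refl ?dimvv.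
  case=> [|[|i]] // _ /=; split=> //.
  + exact sKF.
  + exact sFL.
  + exact galKF.
  + by transitivity t; [rewrite tE; exact dimKF|].
  + exact sFL.
  + by rewrite asc_galois.
  + by rewrite asc_galois // -eqNF dimNL' rne1.
- by rewrite -eqNF eq_sym.
- by rewrite -eqNF eq_sym.
Qed.

End Main2.

Unset Implicit Arguments.

Theorem proposition7p6 (F0 : fieldType) (Om : splittingFieldType F0)
    (K L : {subfield Om}) :
  galois K {:Om} -> (K <= L)%VS -> L != K ->
  let Lt := galois_closure K L in
  let G := 'Gal(Lt / K)%G in
  let H := 'Gal(Lt / L)%G in
  let NH := 'N_G(H)%g in
  let HG := <<class_support H G>>%g in
  let N := fixedField_aspace NH in
  let F := fixedField_aspace HG in
  let n := \dim_K L in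
  let r := cluster_size K L in
  let s := cluster_number K L in
  let t := ascending_index K L in
  (* (1) *)
  [/\ (NH = G <-> r = n), (r = n <-> t = n) & (t = n <-> HG = H)] /\
  (* (2) *)
  [/\ ((H <| HG)%g <-> HG \subset NH) & (HG \subset NH <-> (N <= F)%VS)] /\
  (* (3) *)
  ((NH <| G)%g -> HG \subset NH) /\
  (* (4) *)
  (HG = NH -> [/\ NH \proper G, (NH <| G)%g, H \proper HG & (H <| HG)%g]) /\
  (* (5) *)
  [/\ (HG = NH <-> N = F),
      (N = F <->
         [/\ [/\ descending_chain K L [:: L; N; K], L != N & N != K],
             [/\ ascending_chain K L [:: K; F; L], K != F & F != L]
           & N = F])
    & (HG = NH -> r * t = n /\ t = s)].
Proof.
move=> galOm sKL nLK; exact: (main_body galOm sKL nLK).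
Qed.
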